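(* Let $\Gamma$ be a group acting by isometries on a $\delta$-hyperbolic length space $X$. Assume that $\Gamma$ has no parabolic subgroup and that every elliptic subgroup of $\Gamma$ is finite cyclic. Then $\nu(\Gamma,X)\leq 2$.
   Context: For a subgroup $H\le\Gamma$, its limit set $\Lambda(H)\subset\partial X$ is the set of accumulation points of an $H$-orbit. $H$ is elliptic (resp. parabolic, lineal) if $\Lambda(H)$ is empty (resp. has exactly one point, exactly two points), non-elementary if $\Lambda(H)$ has at least three points, and elementary otherwise. An element is loxodromic if its orbits have exactly two accumulation points in $\partial X$. The $\nu$-invariant $\nu(\Gamma,X)$ is the smallest integer $m$ such that, for all $\gamma_0,\gamma\in\Gamma$ with $\gamma$ loxodromic, if $\gamma_0,\gamma\gamma_0\gamma^{-1},\dots,\gamma^m\gamma_0\gamma^{-m}$ generate an elementary subgroup then so do $\gamma_0$ and $\gamma$. *)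

(* Defs.v *)
From Stdlib Require Import Reals List.
Open Scope R_scope.
Set Implicit Arguments.
Unset Strict Implicit.

Record Group := {
  gcar :> Type;
  gmul : gcar -> gcar -> gcar;
  ginv : gcar -> gcar;
  gone : gcar;
  gmulA : forall a b c, gmul a (gmul b c) = gmul (gmul a b) c;
  gmul1g : forall a, gmul gone a = a;
  gmulVg : forall a, gmul (ginv a) a = gone
}.

Arguments gmul : clear implicits.
Arguments ginv : clear implicits.
Arguments gone : clear implicits.

Section GroupDefs.
Variable G : Group.

Definition subgroup (H : G -> Prop) : Prop :=
  H (gone G) /\ (forall a b, H a -> H b -> H (gmul G a b)) /\
  (forall a, H a -> H (ginv G a)).

Definition gen (S : G -> Prop) (g : G) : Prop :=
  forall K : G -> Prop, subgroup K -> (forall s, S s -> K s) -> K g.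

Definition finite_set (H : G -> Prop) : Prop :=
  exists l : list G, forall x, H x -> In x l.

Definition cyclic_subgroup (H : G -> Prop) : Prop :=
  exists g0 : G, forall x, H x <-> gen (fun y => y = g0) x.

Definition finite_cyclic (H : G -> Prop) : Prop :=
  finite_set H /\ cyclic_subgroup H.

Fixpoint gpow (g : G) (k : nat) : G :=
  match k with O => gone G | S k' => gmul G g (gpow g k') end.

Definition conjpow (g a : G) (k : nat) : G :=
  gmul G (gmul G (gpow g k) a) (ginv G (gpow g k)).
End GroupDefs.

Record MetricSpace := {
  mcar :> Type;
  dist : mcar -> mcar -> R;
  dist_refl : forall x, dist x x = 0;
  dist_sep : forall x y, dist x y = 0 -> x = y;
  dist_sym : forall x y, dist x y = dist y x;
  dist_tri : forall x y z, dist x z <= dist x y + dist y z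
}.

Arguments dist : clear implicits.

Section MetricDefs.
Variable X : MetricSpace.

Definition curve_continuous (c : R -> X) : Prop :=
  forall t, 0 <= t <= 1 -> forall eps, 0 < eps -> exists eta, 0 < eta /\
    forall s, 0 <= s <= 1 -> Rabs (s - t) < eta -> dist X (c s) (c t) < eps.

Fixpoint poly_length (c : R -> X) (t0 : R) (ts : list R) : R :=
  match ts with
  | nil => 0
  | t1 :: ts' => dist X (c t0) (c t1) + poly_length c t1 ts'
  end.

Fixpoint increasing_from (t0 : R) (ts : list R) : Prop :=
  match ts with
  | nil => True
  | t1 :: ts' => t0 <= t1 /\ increasing_from t1 ts'
  end.

(** the length of c (sup over subdivisions 0 = t0 <= ... <= tn = 1) is <= L *)
Definition curve_length_le (c : R -> X) (L : R) : Prop :=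
  forall ts : list R, increasing_from 0 (ts ++ 1 :: nil) ->
    poly_length c 0 (ts ++ 1 :: nil) <= L.

Definition length_space : Prop :=
  forall x y eps, 0 < eps -> exists c : R -> X,
    curve_continuous c /\ c 0 = x /\ c 1 = y /\
    curve_length_le c (dist X x y + eps).

Definition gromov_product (w x y : X) : R :=
  (dist X w x + dist X w y - dist X x y) / 2.

Definition hyperbolic (delta : R) : Prop :=
  forall w x y z,
    Rmin (gromov_product w x z) (gromov_product w y z) - delta
      <= gromov_product w x y.

(** sequences converging at infinity / equivalent (same boundary point),
    with respect to a base point o *)
Definition conv_infty (o : X) (u : nat -> X) : Prop :=
  forall M, exists N, forall n m, (N <= n)%nat -> (N <= m)%nat ->
    M <= gromov_product o (u n) (u m).

Definition equiv_infty (o : X) (u v : nat -> X) : Prop :=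
  forall M, exists N, forall n m, (N <= n)%nat -> (N <= m)%nat ->
    M <= gromov_product o (u n) (v m).
End MetricDefs.

Definition isometric_action (G : Group) (X : MetricSpace) (act : G -> X -> X)
  : Prop :=
  (forall x, act (gone G) x = x) /\
  (forall g h x, act (gmul G g h) x = act g (act h x)) /\
  (forall g x y, dist X (act g x) (act g y) = dist X x y).

Section LimitSet.
Variables (G : Group) (X : MetricSpace) (act : G -> X -> X) (o : X).

(** h is a sequence in H whose orbit sequence h_n o converges to a point of
    the Gromov boundary; that point (the class of h_n o) lies in Lambda(H) *)
Definition limit_seq (H : G -> Prop) (h : nat -> G) : Prop :=
  (forall n, H (h n)) /\ conv_infty o (fun n => act (h n) o).

Definition distinct_pts (h1 h2 : nat -> G) : Prop :=
  ~ equiv_infty o (fun n => act (h1 n) o) (fun n => act (h2 n) o).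

(** Lambda(H) has at least 1 / 2 / 3 points *)
Definition lim_ge1 (H : G -> Prop) : Prop := exists h, limit_seq H h.
Definition lim_ge2 (H : G -> Prop) : Prop :=
  exists h1 h2, limit_seq H h1 /\ limit_seq H h2 /\ distinct_pts h1 h2.
Definition lim_ge3 (H : G -> Prop) : Prop :=
  exists h1 h2 h3, limit_seq H h1 /\ limit_seq H h2 /\ limit_seq H h3 /\
    distinct_pts h1 h2 /\ distinct_pts h1 h3 /\ distinct_pts h2 h3.

Definition elliptic (H : G -> Prop) : Prop := ~ lim_ge1 H.
Definition parabolic (H : G -> Prop) : Prop := lim_ge1 H /\ ~ lim_ge2 H.
Definition lineal (H : G -> Prop) : Prop := lim_ge2 H /\ ~ lim_ge3 H.
Definition nonelementary (H : G -> Prop) : Prop := lim_ge3 H.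
Definition elementary (H : G -> Prop) : Prop := ~ lim_ge3 H.

Definition loxodromic (g : G) : Prop := lineal (gen (fun y => y = g)).

Definition nu_property (m : nat) : Prop :=
  forall g0 g : G, loxodromic g ->
    elementary (gen (fun y => exists k, (k <= m)%nat /\ y = conjpow g g0 k)) ->
    elementary (gen (fun y => y = g0 \/ y = g)).

(** nu(Gamma, X) <= n : the least m with nu_property m exists and is <= n *)
Definition nu_le (n : nat) : Prop := exists m, (m <= n)%nat /\ nu_property m.
End LimitSet.

(* Main.v *)
From Stdlib Require Import Reals List Arith Lia Lra Classical IndefiniteDescription FinFun.
Require Import Defs.
Open Scope R_scope.
Local Notation "x <*> y" := (gmul _ x y) (at level 40, left associativity).
Local Notation "x ^-1" := (ginv _ x) (at level 2).

Open Scope R_scope.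


Lemma mulgV {G : Group} (a : G) : a <*> a^-1 = gone G.
Proof.
  rewrite <- (gmul1g (a <*> a^-1)).
  rewrite <- (gmulVg (a^-1)) at 1.
  rewrite <- gmulA. rewrite (gmulA (a^-1) a (a^-1)). rewrite gmulVg, gmul1g.
  apply gmulVg.
Qed.

Lemma mulg1 {G : Group} (a : G) : a <*> gone G = a.
Proof. rewrite <- (gmulVg a), gmulA, mulgV. apply gmul1g. Qed.

Lemma mulg_cancel {G : Group} (a b c : G) : a <*> b = a <*> c -> b = c.
Proof.
  intro H. rewrite <- (gmul1g b), <- (gmul1g c), <- (gmulVg a), <- !gmulA, H. reflexivity.
Qed.

Lemma inv_uniq {G : Group} (a b : G) : a <*> b = gone G -> a^-1 = b.
Proof.
  intro H. apply (mulg_cancel a). rewrite mulgV, H; reflexivity.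
Qed.

Lemma invgK {G : Group} (a : G) : (a^-1)^-1 = a.
Proof. apply inv_uniq. apply gmulVg. Qed.

Lemma invg1 {G : Group} : (gone G)^-1 = gone G.
Proof. apply inv_uniq. apply gmul1g. Qed.

Lemma invMg {G : Group} (a b : G) : (a <*> b)^-1 = b^-1 <*> a^-1.
Proof.
  apply inv_uniq. rewrite <- gmulA, (gmulA b), mulgV, gmul1g. apply mulgV.
Qed.

Lemma gpowD {G : Group} (c : G) i j : gpow c (i + j) = gpow c i <*> gpow c j.
Proof.
  induction i; simpl. - now rewrite gmul1g. - rewrite IHi. apply gmulA.
Qed.

Lemma gpow1g {G : Group} j : gpow (gone G) j = gone G.
Proof. induction j; simpl; [reflexivity| rewrite IHj; apply gmul1g]. Qed.

Lemma gpowM {G : Group} (c : G) i j : gpow c (i * j) = gpow (gpow c i) j.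
Proof.
  induction j; simpl.
  - now rewrite Nat.mul_0_r.
  - rewrite <- IHj. replace (i * S j)%nat with (i + i * j)%nat by lia. apply gpowD.
Qed.

Lemma gpow_conj {G : Group} (h x : G) k :
  gpow (h <*> x <*> h^-1) k = h <*> gpow x k <*> h^-1.
Proof.
  induction k; simpl.
  - rewrite mulg1. symmetry; apply mulgV.
  - rewrite IHk. rewrite !gmulA. f_equal. rewrite <- !gmulA. f_equal. f_equal.
    rewrite gmulA, gmulVg, gmul1g. reflexivity.
Qed.

Open Scope R_scope.

Lemma gen_subgroup {G : Group} (S : G -> Prop) : subgroup (gen S).
Proof.
  split; [|split].
  - intros K HK _. apply HK.
  - intros a b Ha Hb K HK HS. apply HK; [apply Ha|apply Hb]; auto.
  - intros a Ha K HK HS. apply HK. apply Ha; auto.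
Qed.

Lemma gen_incl {G : Group} (S : G -> Prop) s : S s -> gen S s.
Proof. intros Hs K HK HS. auto. Qed.

Lemma gen_min {G : Group} (S K : G -> Prop) :
  subgroup K -> (forall s, S s -> K s) -> forall z, gen S z -> K z.
Proof. intros HK HS z Hz. apply Hz; auto. Qed.

Lemma gen_mono {G : Group} (S S' : G -> Prop) :
  (forall s, S s -> S' s) -> forall z, gen S z -> gen S' z.
Proof.
  intros H z Hz. apply (gen_min S); auto using gen_subgroup.
  intros s Hs. apply gen_incl; auto.
Qed.

Lemma conj_subgroup {G : Group} (K : G -> Prop) (h : G) :
  subgroup K -> subgroup (fun z => K (h <*> z <*> h^-1)).
Proof.
  intros [H1 [HM HI]]. split; [|split].
  - rewrite mulg1, mulgV. auto.
  - intros a b Ha Hb.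
    replace (h <*> (a <*> b) <*> h^-1) with
      ((h <*> a <*> h^-1) <*> (h <*> b <*> h^-1)); auto.
    rewrite <- !gmulA. f_equal. f_equal. rewrite !gmulA, gmulVg, gmul1g.
    reflexivity.
  - intros a Ha.
    replace (h <*> a^-1 <*> h^-1) with ((h <*> a <*> h^-1)^-1); auto.
    rewrite !invMg, invgK, gmulA. reflexivity.
Qed.

Lemma gen_conj {G : Group} (S K : G -> Prop) (h : G) :
  subgroup K -> (forall s, S s -> K (h <*> s <*> h^-1)) ->
  forall z, gen S z -> K (h <*> z <*> h^-1).
Proof.
  intros HK HS z Hz.
  exact (gen_min S (fun z => K (h <*> z <*> h^-1)) (conj_subgroup K h HK) HS z Hz).
Qed.

Lemma sub_one {G : Group} (K : G -> Prop) : subgroup K -> K (gone G).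
Proof. intros [H _]; exact H. Qed.
Lemma sub_mul {G : Group} (K : G -> Prop) a b : subgroup K -> K a -> K b -> K (a <*> b).
Proof. intros [_ [H _]]; auto. Qed.
Lemma sub_inv {G : Group} (K : G -> Prop) a : subgroup K -> K a -> K (a^-1).
Proof. intros [_ [_ H]]; auto. Qed.

Lemma sub_gpow {G : Group} (K : G -> Prop) c k : subgroup K -> K c -> K (gpow c k).
Proof.
  intros HK Hc. induction k; simpl. apply sub_one; auto. apply sub_mul; auto.
Qed.

Open Scope R_scope.

Lemma gp_sym {X : MetricSpace} (w x y : X) : gromov_product w x y = gromov_product w y x.
Proof. unfold gromov_product. rewrite (dist_sym x y). lra. Qed.

Lemma gp_nonneg {X : MetricSpace} (w x y : X) : 0 <= gromov_product w x y.
Proof.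
  unfold gromov_product. pose proof (dist_tri x w y). rewrite (dist_sym x w) in H. lra.
Qed.

Lemma gp_xx {X : MetricSpace} (w x : X) : gromov_product w x x = dist X w x.
Proof. unfold gromov_product. rewrite dist_refl. lra. Qed.

Lemma gp_close {X : MetricSpace} (o : X) {x y x' y' : X} {D D'} :
  dist X x x' <= D -> dist X y y' <= D' ->
  gromov_product o x y - D - D' <= gromov_product o x' y'.
Proof.
  intros Hx Hy. unfold gromov_product.
  pose proof (dist_tri o x' x). pose proof (dist_tri o y' y).
  pose proof (dist_tri x' x y'). pose proof (dist_tri x y y').
  rewrite (dist_sym x' x) in *. rewrite (dist_sym y' y) in *.
  lra.
Qed.

Lemma equiv_close {X : MetricSpace} {o : X} {u v : nat -> X} (u' v' : nat -> X) {D D'} :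
  (forall n, dist X (u n) (u' n) <= D) -> (forall n, dist X (v n) (v' n) <= D') ->
  equiv_infty o u v -> equiv_infty o u' v'.
Proof.
  intros Hu Hv He M. destruct (He (M + D + D')) as [N HN]. exists N. intros n m Hn Hm.
  specialize (HN n m Hn Hm). pose proof (gp_close o (Hu n) (Hv m)). lra.
Qed.

Lemma equiv_ext {X : MetricSpace} {o : X} {u v : nat -> X} (u' v' : nat -> X) :
  (forall n, u n = u' n) -> (forall n, v n = v' n) ->
  equiv_infty o u v -> equiv_infty o u' v'.
Proof.
  intros Hu Hv He M. destruct (He M) as [N HN]. exists N. intros n m Hn Hm.
  rewrite <- Hu, <- Hv. auto.
Qed.

Lemma equiv_sym {X : MetricSpace} {o : X} {u v : nat -> X} :
  equiv_infty o u v -> equiv_infty o v u.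
Proof.
  intros He M. destruct (He M) as [N HN]. exists N. intros n m Hn Hm.
  rewrite gp_sym. auto.
Qed.

Lemma equiv_trans {X : MetricSpace} {delta : R} {o : X} {u v w : nat -> X} :
  hyperbolic X delta ->
  equiv_infty o u v -> equiv_infty o v w -> equiv_infty o u w.
Proof.
  intros Hyp H1 H2 M. destruct (H1 (M + delta)) as [N1 HN1].
  destruct (H2 (M + delta)) as [N2 HN2]. exists (Nat.max N1 N2). intros n m Hn Hm.
  pose proof (Hyp o (u n) (w m) (v (Nat.max N1 N2))) as Hh.
  assert (A : M + delta <= gromov_product o (u n) (v (Nat.max N1 N2))) by (apply HN1; lia).
  assert (B : M + delta <= gromov_product o (v (Nat.max N1 N2)) (w m)) by (apply HN2; lia).
  rewrite (gp_sym o (w m)) in Hh.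
  unfold Rmin in Hh. destruct Rle_dec; lra.
Qed.

Lemma gp_act {G : Group} {X : MetricSpace} (act : G -> X -> X) (o : X) k p q :
  isometric_action act ->
  gromov_product o p q - dist X (act k o) o <= gromov_product o (act k p) (act k q).
Proof.
  intros [_ [_ Hi]]. unfold gromov_product. rewrite Hi.
  pose proof (dist_tri (act k o) o (act k p)). pose proof (dist_tri (act k o) o (act k q)).
  rewrite !Hi in *. rewrite (dist_sym (act k o) o) in *. lra.
Qed.

Lemma equiv_act {G : Group} {X : MetricSpace} (act : G -> X -> X) (o : X) k u v :
  isometric_action act -> equiv_infty o u v ->
  equiv_infty o (fun n => act k (u n)) (fun n => act k (v n)).
Proof.
  intros Ha He M. destruct (He (M + dist X (act k o) o)) as [N HN]. exists N.
  intros n m Hn Hm. specialize (HN n m Hn Hm).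
  pose proof (gp_act act o k (u n) (v m) Ha). lra.
Qed.

Lemma not_equiv_bound {X : MetricSpace} (delta : R) (o : X) (u v : nat -> X) :
  hyperbolic X delta -> conv_infty o u -> conv_infty o v -> ~ equiv_infty o u v ->
  exists B N, forall j k, (N <= j)%nat -> (N <= k)%nat -> gromov_product o (u j) (v k) <= B.
Proof.
  intros Hyp Hu Hv Hne.
  apply not_all_ex_not in Hne. destruct Hne as [M HM].
  destruct (Hu (M + 2 * Rabs delta)) as [N1 HN1]. destruct (Hv (M + 2 * Rabs delta)) as [N2 HN2].
  exists (M + 2 * Rabs delta), (Nat.max N1 N2). intros j k Hj Hk.
  apply Rnot_lt_le. intro Hlt. apply HM. exists (Nat.max N1 N2). intros n m Hn Hm.
  pose proof (Rle_abs delta). pose proof (Rabs_pos delta).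
  pose proof (Hyp o (u n) (v m) (u j)) as H1.
  pose proof (Hyp o (u j) (v m) (v k)) as H2.
  assert (A : M + 2 * Rabs delta <= gromov_product o (u n) (u j)) by (apply HN1; lia).
  assert (B : M + 2 * Rabs delta <= gromov_product o (v m) (v k)) by (apply HN2; lia).
  rewrite (gp_sym o (v m) (u j)) in H1.
  unfold Rmin in H1, H2. destruct (Rle_dec _ _) in H2; destruct (Rle_dec _ _) in H1; lra.
Qed.

Lemma equiv_upper {X : MetricSpace} (delta : R) (o : X) (u v u' v' : nat -> X) B N0 :
  hyperbolic X delta -> equiv_infty o u u' -> equiv_infty o v v' ->
  (forall j k, (N0 <= j)%nat -> (N0 <= k)%nat -> gromov_product o (u j) (v k) <= B) ->
  exists N, forall k, (N <= k)%nat -> gromov_product o (u' k) (v' k) <= B + 2 * Rabs delta.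
Proof.
  intros Hyp Hu Hv HB.
  destruct (Hu (B + 2 * Rabs delta + 1)) as [N1 HN1]. destruct (Hv (B + 2 * Rabs delta + 1)) as [N2 HN2].
  exists (Nat.max N0 (Nat.max N1 N2)). intros k Hk.
  apply Rnot_lt_le. intro Hlt.
  pose proof (Rle_abs delta). pose proof (Rabs_pos delta).
  assert (A : B + 2 * Rabs delta + 1 <= gromov_product o (u k) (u' k)) by (apply HN1; lia).
  assert (C : B + 2 * Rabs delta + 1 <= gromov_product o (v k) (v' k)) by (apply HN2; lia).
  assert (D : gromov_product o (u k) (v k) <= B) by (apply HB; lia).
  pose proof (Hyp o (u k) (v k) (u' k)) as H1.
  pose proof (Hyp o (u' k) (v k) (v' k)) as H2.
  rewrite (gp_sym o (v k) (u' k)) in H1.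
  unfold Rmin in H1, H2. destruct (Rle_dec _ _) in H2; destruct (Rle_dec _ _) in H1; lra.
Qed.

Open Scope R_scope.

Lemma act_inv_l {G : Group} {X : MetricSpace} (act : G -> X -> X) h p :
  isometric_action act -> act (h^-1) (act h p) = p.
Proof. intros [H1 [H2 _]]. rewrite <- H2, gmulVg. auto. Qed.

Lemma act_inv_r {G : Group} {X : MetricSpace} (act : G -> X -> X) h p :
  isometric_action act -> act h (act (h^-1) p) = p.
Proof. intros [H1 [H2 _]]. rewrite <- H2, mulgV. auto. Qed.

Lemma gp_base {G : Group} {X : MetricSpace} (act : G -> X -> X) (o : X) h x y :
  isometric_action act ->
  gromov_product o (act (h^-1) x) (act (h^-1) y) =
  dist X o (act h o) - gromov_product o (act h o) x - gromov_product o (act h o) y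
  + gromov_product o x y.
Proof.
  intros Ha. pose proof Ha as [_ [_ Hi]].
  assert (E : forall z, dist X o (act (h^-1) z) = dist X (act h o) z).
  { intro z. rewrite <- (Hi h). rewrite act_inv_r; auto. }
  unfold gromov_product. rewrite !E, Hi. lra.
Qed.

Definition Pres {G : Group} {X : MetricSpace} (act : G -> X -> X) (o : X) (a b : nat -> X) (k : G) :=
  (equiv_infty o (fun n => act k (a n)) a /\ equiv_infty o (fun n => act k (b n)) b) \/
  (equiv_infty o (fun n => act k (a n)) b /\ equiv_infty o (fun n => act k (b n)) a).

Lemma final_geo {G : Group} {X : MetricSpace} (delta : R) (act : G -> X -> X) (o : X)
  (a b : nat -> X) (h : nat -> G) :
  hyperbolic X delta -> isometric_action act ->
  conv_infty o a -> conv_infty o b -> ~ equiv_infty o a b ->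
  (forall n, Pres act o a b ((h n)^-1)) ->
  conv_infty o (fun n => act (h n) o) ->
  equiv_infty o (fun n => act (h n) o) a \/ equiv_infty o (fun n => act (h n) o) b.
Proof.
  intros Hyp Ha Hca Hcb Hab HP Hu.
  apply NNPP. intro Hn. apply not_or_and in Hn. destruct Hn as [Hna Hnb].
  destruct (@not_equiv_bound _ delta o _ _ Hyp Hu Hca Hna) as [B1 [N1 HB1]].
  destruct (@not_equiv_bound _ delta o _ _ Hyp Hu Hcb Hnb) as [B2 [N2 HB2]].
  destruct (@not_equiv_bound _ delta o _ _ Hyp Hca Hcb Hab) as [B0 [N0 HB0]].
  destruct (Hu (B0 + 2 * Rabs delta + B1 + B2 + 1)) as [N3 HN3].
  set (n := Nat.max N3 (Nat.max N1 N2)).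
  assert (Hd : B0 + 2 * Rabs delta + B1 + B2 + 1 <= dist X o (act (h n) o)).
  { rewrite <- gp_xx. apply HN3; unfold n; lia. }
  assert (HU : exists N, forall k, (N <= k)%nat ->
     gromov_product o (act ((h n)^-1) (a k)) (act ((h n)^-1) (b k)) <= B0 + 2 * Rabs delta).
  { destruct (HP n) as [[E1 E2]|[E1 E2]].
    - apply (@equiv_upper _ delta o a b _ _ _ _ Hyp (equiv_sym E1) (equiv_sym E2) HB0).
    - apply (@equiv_upper _ delta o b a _ _ _ N0 Hyp (equiv_sym E1) (equiv_sym E2)).
      intros j k Hj Hk. rewrite gp_sym. apply HB0; auto. }
  destruct HU as [N HN].
  set (k := Nat.max N (Nat.max N1 N2)).
  specialize (HN k ltac:(unfold k; lia)).
  rewrite gp_base in HN; auto.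
  assert (T1 : gromov_product o (act (h n) o) (a k) <= B1) by (apply HB1; unfold n, k; lia).
  assert (T2 : gromov_product o (act (h n) o) (b k) <= B2) by (apply HB2; unfold n, k; lia).
  pose proof (gp_nonneg o (a k) (b k)).
  lra.
Qed.

Open Scope nat_scope.

Lemma pigeon {A : Type} (f : nat -> A) (l : list A) :
  (forall i, In (f i) l) -> exists i j, (i < j)%nat /\ f i = f j.
Proof.
  intro Hf. apply NNPP. intro Hn.
  assert (Hinj : Injective f).
  { intros i j E. destruct (Nat.lt_trichotomy i j) as [H|[H|H]]; auto.
    - exfalso. apply Hn. exists i, j. auto.
    - exfalso. apply Hn. exists j, i. auto. }
  pose proof (NoDup_incl_length (l := map f (seq 0 (S (length l)))) (l' := l)
    (Injective_map_NoDup Hinj (seq_NoDup _ _))) as H.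
  rewrite length_map, length_seq in H. assert (incl (map f (seq 0 (S (length l)))) l) as Hi.
  { intros z Hz. apply in_map_iff in Hz. destruct Hz as [i [<- _]]. auto. }
  specialize (H Hi). lia.
Qed.

Lemma least_nat (P : nat -> Prop) : (exists n, P n) -> exists n, P n /\ forall m, P m -> (n <= m)%nat.
Proof.
  intros [n Hn]. revert Hn. induction n as [n IH] using lt_wf_ind. intro Hn.
  destruct (classic (exists m, P m /\ (m < n)%nat)) as [[m [Hm Hmn]]|Hno].
  - apply (IH m Hmn Hm).
  - exists n. split; auto. intros m Hm. destruct (Nat.lt_ge_cases m n); auto.
    exfalso; apply Hno; eauto.
Qed.

Lemma gpow_gen {G : Group} (c : G) k : gen (fun y => y = c) (gpow c k).
Proof. apply sub_gpow. apply gen_subgroup. apply gen_incl. reflexivity. Qed.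

Lemma cyclic_core {G : Group} (c : G) (l : list G) (x y : G) :
  (forall z, gen (fun w => w = c) z -> In z l) ->
  gen (fun w => w = c) x -> gen (fun w => w = c) y ->
  (forall k, gpow x k = gone G -> gpow y k = gone G) ->
  gen (fun w => w = x) y.
Proof.
  intros Hl Hx Hy Hxy.
  destruct (pigeon (fun i => gpow c i) l (fun i => Hl _ (gpow_gen c i))) as [i [j [Hij Eij]]].
  assert (Hper : exists n, (0 < n)%nat /\ gpow c n = gone G).
  { exists (j - i)%nat. split; [lia|]. apply (mulg_cancel (gpow c i)).
    rewrite <- gpowD, mulg1. replace (i + (j - i))%nat with j by lia. auto. }
  destruct (least_nat _ Hper) as [n [[Hn0 Hn] Hmin]].
  assert (Hdiv : forall m, gpow c m = gone G -> Nat.divide n m).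
  { intros m Hm. pose proof (Nat.div_mod m n ltac:(lia)) as E.
    pose proof (Nat.mod_upper_bound m n ltac:(lia)).
    assert (gpow c (m mod n) = gone G).
    { rewrite E, gpowD, gpowM, Hn, gpow1g, gmul1g in Hm. auto. }
    destruct (Nat.eq_dec (m mod n) 0) as [Z|Z].
    - exists (m / n). lia.
    - assert (0 < m mod n) by lia. specialize (Hmin (m mod n) (conj H1 H0)). lia. }
  assert (Hpow : forall z, gen (fun w => w = c) z -> exists a, z = gpow c a).
  { apply gen_min.
    - split; [|split].
      + exists 0%nat. reflexivity.
      + intros p q [a ->] [b ->]. exists (a + b)%nat. symmetry; apply gpowD.
      + intros p [a ->]. exists (a * (n - 1))%nat. apply inv_uniq.
        rewrite <- gpowD. replace (a + a * (n - 1))%nat with (n * a)%nat by nia.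
        rewrite gpowM, Hn. apply gpow1g.
    - intros s ->. exists 1%nat. simpl. symmetry; apply mulg1. }
  destruct (Hpow x Hx) as [a Ha]. destruct (Hpow y Hy) as [b Hb].
  set (d := Nat.gcd n a).
  assert (Hd0 : d <> 0%nat) by (unfold d; rewrite Nat.gcd_eq_0; lia).
  assert (Hcd : gen (fun w => w = x) (gpow c d)).
  { destruct (Nat.gcd_bezout n a) as [[u [v E]]|[u [v E]]].
    -
      assert (gpow c d = ginv G (gpow x v)).
      { symmetry. apply inv_uniq. rewrite Ha, <- gpowM, <- gpowD.
        replace (a * v + d)%nat with (n * u)%nat by (unfold d; lia).
        rewrite gpowM, Hn. apply gpow1g. }
      rewrite H. apply sub_inv. apply gen_subgroup. apply sub_gpow. apply gen_subgroup.
      apply gen_incl. reflexivity.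
    -
      assert (gpow c d = gpow x u).
      { rewrite Ha, <- gpowM. replace (a * u)%nat with (d + n * v)%nat by (unfold d; lia).
        rewrite gpowD, gpowM, Hn, gpow1g, mulg1. reflexivity. }
      rewrite H. apply sub_gpow. apply gen_subgroup. apply gen_incl. reflexivity. }
  destruct (Nat.gcd_divide_l n a) as [r Hr]. fold d in Hr.
  destruct (Nat.gcd_divide_r n a) as [a' Ha']. fold d in Ha'.
  assert (Hxr : gpow x r = gone G).
  { rewrite Ha, <- gpowM. replace (a * r)%nat with (n * a')%nat by nia.
    rewrite gpowM, Hn. apply gpow1g. }
  specialize (Hxy r Hxr). rewrite Hb, <- gpowM in Hxy.
  apply Hdiv in Hxy.
  assert (Hr0 : r <> 0%nat) by lia.
  assert (Nat.divide d b).
  { apply (Nat.mul_divide_cancel_r d b r Hr0). rewrite (Nat.mul_comm d r), <- Hr. exact Hxy. }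
  destruct H as [b' Hb']. rewrite Hb, Hb', Nat.mul_comm, gpowM.
  apply sub_gpow. apply gen_subgroup. auto.
Qed.

Open Scope R_scope.
Open Scope R_scope.

Lemma in_max {A : Type} (f : A -> R) (l : list A) z :
  In z l -> f z <= fold_right Rmax 0 (map f l).
Proof.
  induction l as [|w l IH]; simpl; [tauto|]. intros [->|Hz].
  - apply Rmax_l.
  - eapply Rle_trans; [apply IH; auto| apply Rmax_r].
Qed.

Lemma conj0 {G : Group} (g g0 : G) : conjpow g g0 0 = g0.
Proof. unfold conjpow; simpl. rewrite gmul1g, invg1, mulg1. reflexivity. Qed.
Lemma conj1 {G : Group} (g g0 : G) : conjpow g g0 1 = g <*> g0 <*> g^-1.
Proof. unfold conjpow; simpl. rewrite mulg1. reflexivity. Qed.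
Lemma conj2 {G : Group} (g g0 : G) : conjpow g g0 2 = g <*> conjpow g g0 1 <*> g^-1.
Proof. rewrite conj1. unfold conjpow; simpl. rewrite !mulg1, invMg, !gmulA. reflexivity. Qed.

Lemma act_mul {G : Group} {X : MetricSpace} (act : G -> X -> X) g h x :
  isometric_action act -> act (g <*> h) x = act g (act h x).
Proof. intros [_ [H _]]. auto. Qed.

Lemma act_dist {G : Group} {X : MetricSpace} (act : G -> X -> X) g x y :
  isometric_action act -> dist X (act g x) (act g y) = dist X x y.
Proof. intros [_ [_ H]]. auto. Qed.

Lemma caseA {G : Group} {X : MetricSpace} (act : G -> X -> X) (o : X) (g0 g : G) :
  isometric_action act -> loxodromic act o g ->
  finite_cyclic (gen (fun y => y = g0 \/ y = conjpow g g0 1)) ->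
  elementary act o (gen (fun y => y = g0 \/ y = g)).
Proof.
  intros Ha Hlox [[l Hl] [c Hc]].
  set (H1 := gen (fun y => y = g0 \/ y = conjpow g g0 1)) in *.
  set (y := g <*> g0 <*> g^-1).
  assert (Hcl : forall z, gen (fun w => w = c) z -> In z l) by (intros z Hz; apply Hl, (proj2 (Hc z)), Hz).
  assert (Hg0c : gen (fun w => w = c) g0) by (apply (proj1 (Hc g0)), gen_incl; auto).
  assert (Hyc : gen (fun w => w = c) y).
  { apply (proj1 (Hc y)). unfold y. rewrite <- conj1. apply gen_incl; auto. }
  assert (Ey : g^-1 <*> y <*> (g^-1)^-1 = g0).
  { unfold y. rewrite invgK, !gmulA, gmulVg, gmul1g, <- gmulA, gmulVg, mulg1. reflexivity. }
  assert (Y1 : gen (fun w => w = g0) y).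
  { apply (cyclic_core c l g0 y Hcl Hg0c Hyc). intros k Hk. unfold y.
    rewrite gpow_conj, Hk, mulg1. apply mulgV. }
  assert (X1 : gen (fun w => w = y) g0).
  { apply (cyclic_core c l y g0 Hcl Hyc Hg0c). intros k Hk. rewrite <- Ey.
    rewrite gpow_conj, Hk, mulg1. apply mulgV. }
  set (N := gen (fun w => w = g0)).
  assert (NS : subgroup N) by apply gen_subgroup.
  assert (NG1 : forall n, N n -> N (g <*> n <*> g^-1)).
  { apply gen_conj; auto. intros s ->. exact Y1. }
  assert (NG2 : forall n, N n -> N (g^-1 <*> n <*> g)).
  { intros n Hn. replace (g^-1 <*> n <*> g) with (g^-1 <*> n <*> (g^-1)^-1) by (rewrite invgK; reflexivity).
    revert n Hn. apply gen_conj; auto.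
    intros s ->. apply (gen_conj (fun w => w = y) N (g^-1) NS); auto.
    intros s ->. rewrite Ey. apply gen_incl; auto. }
  set (Norm := fun j => forall n, N n -> N (j <*> n <*> j^-1) /\ N (j^-1 <*> n <*> j)).
  assert (NormS : subgroup Norm).
  { split; [|split].
    - intros n Hn. rewrite invg1, gmul1g, mulg1. auto.
    - intros j1 j2 H1' H2' n Hn. split.
      + replace (j1 <*> j2 <*> n <*> (j1 <*> j2)^-1) with (j1 <*> (j2 <*> n <*> j2^-1) <*> j1^-1).
        * apply H1'. apply H2'. auto.
        * rewrite invMg, !gmulA. reflexivity.
      + replace ((j1 <*> j2)^-1 <*> n <*> (j1 <*> j2)) with (j2^-1 <*> (j1^-1 <*> n <*> j1) <*> j2).
        * apply H2'. apply H1'. auto.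
        * rewrite invMg, !gmulA. reflexivity.
    - intros j Hj n Hn. rewrite invgK. split; apply Hj; auto. }
  assert (gNorm : forall j, gen (fun w => w = g) j -> Norm j).
  { apply gen_min; auto. intros s -> n Hn. split; auto. }
  set (T := fun k => exists j n, gen (fun w => w = g) j /\ N n /\ k = j <*> n).
  assert (TS : subgroup T).
  { pose proof (gen_subgroup (fun w => w = g)) as GS.
    split; [|split].
    - exists (gone G), (gone G). split; [apply sub_one; auto|]. split; [apply sub_one; auto|].
      rewrite mulg1. reflexivity.
    - intros k k' [j [n [Hj [Hn ->]]]] [j' [n' [Hj' [Hn' ->]]]].
      exists (j <*> j'), (j'^-1 <*> n <*> j' <*> n'). split; [apply sub_mul; auto|].
      split. + apply sub_mul; auto. apply (gNorm j' Hj'). auto.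
      + rewrite !gmulA. rewrite <- (gmulA j j' (j'^-1)), mulgV, mulg1. reflexivity.
    - intros k [j [n [Hj [Hn ->]]]]. exists (j^-1), (j <*> n^-1 <*> j^-1).
      split; [apply sub_inv; auto|]. split. + apply (gNorm j Hj). apply sub_inv; auto.
      + rewrite invMg, !gmulA, gmulVg, gmul1g. reflexivity. }
  assert (KT : forall k, gen (fun y => y = g0 \/ y = g) k -> T k).
  { apply gen_min; auto. intros s [->| ->].
    - exists (gone G), g0. split; [apply sub_one, gen_subgroup|]. split; [apply gen_incl; auto|].
      symmetry; apply gmul1g.
    - exists g, (gone G). split; [apply gen_incl; auto|]. split; [apply sub_one; auto|].
      symmetry; apply mulg1. }
  assert (NH1 : forall n, N n -> H1 n).
  { apply gen_min; [apply gen_subgroup|]. intros s ->. apply gen_incl; auto. }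
  set (D := fold_right Rmax 0 (map (fun z => dist X (act z o) o) l)).
  assert (Bd : forall k, T k -> exists j, gen (fun w => w = g) j /\ dist X (act k o) (act j o) <= D).
  { intros k [j [n [Hj [Hn ->]]]]. exists j. split; auto.
    rewrite act_mul, act_dist; auto. apply (in_max (fun z => dist X (act z o) o)). apply Hl, NH1, Hn. }
  assert (Lift : forall h : nat -> G, limit_seq act o (gen (fun y => y = g0 \/ y = g)) h ->
     exists J, limit_seq act o (gen (fun w => w = g)) J /\
        forall n, dist X (act (h n) o) (act (J n) o) <= D).
  { intros h [Hh Hc']. destruct (functional_choice _ (fun n => Bd (h n) (KT _ (Hh n)))) as [J HJ].
    exists J. split; [split|].
    - intro n. apply HJ.
    - apply (equiv_close _ _ (fun n => proj2 (HJ n)) (fun n => proj2 (HJ n)) Hc').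
    - intro n. apply HJ. }
  intros [h1 [h2 [h3 [L1 [L2 [L3 [D12 [D13 D23]]]]]]]].
  destruct (Lift h1 L1) as [J1 [M1 B1]]. destruct (Lift h2 L2) as [J2 [M2 B2]].
  destruct (Lift h3 L3) as [J3 [M3 B3]].
  assert (Sy : forall h J : nat -> G, (forall n, dist X (act (h n) o) (act (J n) o) <= D) ->
                  forall n, dist X (act (J n) o) (act (h n) o) <= D).
  { intros h J HB n. rewrite dist_sym. auto. }
  destruct Hlox as [_ Hn3]. apply Hn3.
  exists J1, J2, J3. split; [exact M1|]. split; [exact M2|]. split; [exact M3|]. split; [|split].
  - intro E. apply D12. apply (equiv_close _ _ (Sy _ _ B1) (Sy _ _ B2) E).
  - intro E. apply D13. apply (equiv_close _ _ (Sy _ _ B1) (Sy _ _ B3) E).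
  - intro E. apply D23. apply (equiv_close _ _ (Sy _ _ B2) (Sy _ _ B3) E).
Qed.

Open Scope R_scope.

Lemma equiv_push {G : Group} {X : MetricSpace} (act : G -> X -> X) (o : X) k1 k2 (u v : nat -> X) :
  isometric_action act ->
  equiv_infty o (fun n => act k2 (u n)) v ->
  equiv_infty o (fun n => act (k1 <*> k2) (u n)) (fun n => act k1 (v n)).
Proof.
  intros Ha E. apply (equiv_act act o k1) in E; auto.
  revert E. apply equiv_ext; intro n; auto. rewrite act_mul; auto.
Qed.

Lemma equiv_pull {G : Group} {X : MetricSpace} (act : G -> X -> X) (o : X) k (u v : nat -> X) :
  isometric_action act ->
  equiv_infty o (fun n => act k (u n)) v ->
  equiv_infty o (fun n => act (k^-1) (v n)) u.
Proof.
  intros Ha E. apply (equiv_act act o (k^-1)) in E; auto. apply equiv_sym.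
  revert E. apply equiv_ext; intro n; auto. rewrite act_inv_l; auto.
Qed.

Lemma Pres_mk {G : Group} {X : MetricSpace} (delta : R) (act : G -> X -> X) (o : X) (a b : nat -> X) k :
  hyperbolic X delta -> isometric_action act -> ~ equiv_infty o a b ->
  (equiv_infty o (fun n => act k (a n)) a \/ equiv_infty o (fun n => act k (a n)) b) ->
  (equiv_infty o (fun n => act k (b n)) a \/ equiv_infty o (fun n => act k (b n)) b) ->
  Pres act o a b k.
Proof.
  intros Hyp Ha Hab [A|A] [B|B]; unfold Pres; auto; exfalso; apply Hab.
  - pose proof (equiv_trans Hyp A (equiv_sym B)) as E.
    apply (equiv_pull act o k) in E; auto. apply equiv_sym.
    revert E. apply equiv_ext; intro n; auto. rewrite act_inv_l; auto.
  - pose proof (equiv_trans Hyp A (equiv_sym B)) as E.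
    apply (equiv_pull act o k) in E; auto. apply equiv_sym.
    revert E. apply equiv_ext; intro n; auto. rewrite act_inv_l; auto.
Qed.

Lemma Pres_sub {G : Group} {X : MetricSpace} (delta : R) (act : G -> X -> X) (o : X) (a b : nat -> X) :
  hyperbolic X delta -> isometric_action act -> conv_infty o a -> conv_infty o b ->
  subgroup (Pres act o a b).
Proof.
  intros Hyp Ha Hca Hcb. pose proof Ha as [A1 _]. split; [|split].
  - left. split.
    + revert Hca. apply equiv_ext; intro n; auto.
    + revert Hcb. apply equiv_ext; intro n; auto.
  - intros k1 k2 P1 P2.
    destruct P2 as [[Ea Eb]|[Ea Eb]].
    + apply (equiv_push act o k1) in Ea; auto. apply (equiv_push act o k1) in Eb; auto.
      destruct P1 as [[Fa Fb]|[Fa Fb]].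
      * left. split; eapply equiv_trans; eauto.
      * right. split; eapply equiv_trans; eauto.
    + apply (equiv_push act o k1) in Ea; auto. apply (equiv_push act o k1) in Eb; auto.
      destruct P1 as [[Fa Fb]|[Fa Fb]].
      * right. split; eapply equiv_trans; eauto.
      * left. split; eapply equiv_trans; eauto.
  - intros k [[Ea Eb]|[Ea Eb]].
    + left. split; apply (equiv_pull act o k); auto.
    + right. split; apply (equiv_pull act o k); auto.
Qed.

Lemma caseB {G : Group} {X : MetricSpace} (delta : R) (act : G -> X -> X) (o : X) (g0 g : G) :
  hyperbolic X delta -> isometric_action act ->
  lim_ge2 act o (gen (fun y => y = g0 \/ y = conjpow g g0 1)) ->
  elementary act o (gen (fun y => exists k, (k <= 2)%nat /\ y = conjpow g g0 k)) ->
  elementary act o (gen (fun y => y = g0 \/ y = g)).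
Proof.
  intros Hyp Ha [al [be [[Mal Cal] [[Mbe Cbe] Dab]]]] Helem.
  set (H := gen (fun y => exists k, (k <= 2)%nat /\ y = conjpow g g0 k)) in *.
  set (H1 := gen (fun y => y = g0 \/ y = conjpow g g0 1)) in *.
  set (a := fun n => act (al n) o) in *. set (b := fun n => act (be n) o) in *.
  assert (HS : subgroup H) by apply gen_subgroup.
  assert (H1S : subgroup H1) by apply gen_subgroup.
  assert (H1H : forall z, H1 z -> H z).
  { apply gen_min; auto. intros s [->| ->]; apply gen_incl.
    - exists 0%nat. rewrite conj0. auto.
    - exists 1%nat. auto. }
  assert (CL2 : forall ga, limit_seq act o H ga ->
     equiv_infty o (fun n => act (ga n) o) a \/ equiv_infty o (fun n => act (ga n) o) b).
  { intros ga Lg. apply NNPP. intro Hn. apply not_or_and in Hn. destruct Hn as [N1 N2].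
    apply Helem. exists al, be, ga. split; [split; auto|]. split; [split; auto|].
    split; auto. split; [exact Dab|]. split.
    - intro E. apply N1. apply equiv_sym. exact E.
    - intro E. apply N2. apply equiv_sym. exact E. }
  assert (Tr : forall k (ga : nat -> G) (c : nat -> X) Dst,
     limit_seq act o H ga ->
     (forall n, dist X (act (ga n) o) (act k (c n)) <= Dst) ->
     equiv_infty o (fun n => act k (c n)) a \/ equiv_infty o (fun n => act k (c n)) b).
  { intros k ga c Dst Lg Hd.
    destruct (CL2 ga Lg) as [E|E]; [left|right];
      refine (equiv_close _ _ Hd (fun n => Req_le _ _ (dist_refl _)) E). }
  assert (Pg0 : Pres act o a b g0).
  { apply (Pres_mk delta); auto.
    - apply (Tr g0 (fun n => g0 <*> al n) a 0).
      + split. * intro n. apply H1H. apply sub_mul; auto. apply gen_incl; auto.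
        * pose proof (equiv_act act o g0 _ _ Ha Cal) as E. revert E.
          apply equiv_ext; intro n; unfold a; rewrite act_mul; auto.
      + intro n. unfold a. rewrite act_mul, dist_refl; auto. apply Rle_refl.
    - apply (Tr g0 (fun n => g0 <*> be n) b 0).
      + split. * intro n. apply H1H. apply sub_mul; auto. apply gen_incl; auto.
        * pose proof (equiv_act act o g0 _ _ Ha Cbe) as E'. revert E'.
          apply equiv_ext; intro n; unfold b; rewrite act_mul; auto.
      + intro n. unfold b. rewrite act_mul, dist_refl; auto. apply Rle_refl. }
  assert (HconjH : forall z, H1 z -> H (g <*> z <*> g^-1)).
  { apply gen_conj; auto. intros s [->| ->]; apply gen_incl.
    - exists 1%nat. rewrite conj1. auto.
    - exists 2%nat. rewrite conj2. auto. }
  assert (Pg : Pres act o a b g).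
  { apply (Pres_mk delta); auto.
    - apply (Tr g (fun n => g <*> al n <*> g^-1) a (dist X (act (g^-1) o) o)).
      + split. * intro n. apply HconjH. auto.
        * pose proof (equiv_act act o g _ _ Ha Cal) as E.
          refine (equiv_close (D := dist X (act (g^-1) o) o) (D' := dist X (act (g^-1) o) o) _ _ _ _ E).
          -- intro n. unfold a, b. rewrite !(act_mul act) by exact Ha. rewrite !(act_dist act) by exact Ha. first [apply Rle_refl | rewrite dist_sym; apply Rle_refl].
          -- intro n. unfold a, b. rewrite !(act_mul act) by exact Ha. rewrite !(act_dist act) by exact Ha. first [apply Rle_refl | rewrite dist_sym; apply Rle_refl].
      + intro n. unfold a. rewrite !(act_mul act) by exact Ha. rewrite !(act_dist act) by exact Ha. first [apply Rle_refl | rewrite dist_sym; apply Rle_refl].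
    - apply (Tr g (fun n => g <*> be n <*> g^-1) b (dist X (act (g^-1) o) o)).
      + split. * intro n. apply HconjH. auto.
        * pose proof (equiv_act act o g _ _ Ha Cbe) as E.
          refine (equiv_close (D := dist X (act (g^-1) o) o) (D' := dist X (act (g^-1) o) o) _ _ _ _ E).
          -- intro n. unfold a, b. rewrite !(act_mul act) by exact Ha. rewrite !(act_dist act) by exact Ha. first [apply Rle_refl | rewrite dist_sym; apply Rle_refl].
          -- intro n. unfold a, b. rewrite !(act_mul act) by exact Ha. rewrite !(act_dist act) by exact Ha. first [apply Rle_refl | rewrite dist_sym; apply Rle_refl].
      + intro n. unfold b. rewrite !(act_mul act) by exact Ha. rewrite !(act_dist act) by exact Ha. first [apply Rle_refl | rewrite dist_sym; apply Rle_refl]. }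
  assert (PS : subgroup (Pres act o a b)) by (apply (Pres_sub delta); auto).
  assert (KP : forall k, gen (fun y => y = g0 \/ y = g) k -> Pres act o a b k).
  { apply gen_min; auto. intros s [->| ->]; auto. }
  assert (Fin : forall h, limit_seq act o (gen (fun y => y = g0 \/ y = g)) h ->
     equiv_infty o (fun n => act (h n) o) a \/ equiv_infty o (fun n => act (h n) o) b).
  { intros h [Mh Ch]. apply (final_geo delta); auto.
    intro n. apply sub_inv; auto. }
  intros [h1 [h2 [h3 [L1 [L2 [L3 [D12 [D13 D23]]]]]]]].
  destruct (Fin h1 L1) as [E1|E1]; destruct (Fin h2 L2) as [E2|E2];
    destruct (Fin h3 L3) as [E3|E3];
    first [ apply D12; apply (equiv_trans Hyp E1 (equiv_sym E2))
          | apply D13; apply (equiv_trans Hyp E1 (equiv_sym E3))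
          | apply D23; apply (equiv_trans Hyp E2 (equiv_sym E3)) ].
Qed.

Open Scope R_scope.

Theorem lemma3p8 (G : Group) (X : MetricSpace) (delta : R)
  (act : G -> X -> X) (o : X) :
  0 <= delta ->
  length_space X ->
  hyperbolic X delta ->
  isometric_action act ->
  (forall H : G -> Prop, subgroup H -> ~ parabolic act o H) ->
  (forall H : G -> Prop, subgroup H -> elliptic act o H -> finite_cyclic H) ->
  nu_le act o 2.
Proof.
  intros Hd Hlen Hyp Ha Hnp Hell.
  exists 2%nat. split; [lia|].
  intros g0 g Hlox Helem.
  destruct (classic (lim_ge1 act o (gen (fun y => y = g0 \/ y = conjpow g g0 1)))) as [Hne|Hel].
  - apply (caseB delta); auto.
    pose proof (Hnp _ (gen_subgroup (fun y => y = g0 \/ y = conjpow g g0 1))) as Hp. unfold parabolic in Hp.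
    apply NNPP. intro Hn. apply Hp. split; [exact Hne | exact Hn].
  - apply caseA; auto. apply Hell; [apply gen_subgroup | exact Hel].
Qed.
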